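(* Let $d\ge2$, let $u_1,\dots,u_\ell$ be an enumeration of the elementary matrices $I+E_{ij}$ ($i\ne j$) in $\operatorname{SL}_d(\mathbb{Z})$, extended cyclically by $u_m=u_{m\bmod \ell}$, and for $N\ge1$ let $\Gamma_N=\{u_1^{k_1}\cdots u_N^{k_N}:k_i\in\mathbb{Z}\}$, acting on $\mathfrak{sl}_d(\mathbb{Z})$ by conjugation. Then there exist constants $Q,N<\infty$ such that for every companion matrix $c_p\in\mathfrak{sl}_d(\mathbb{Z})$ (i.e. $p$ a monic integer polynomial of degree $d$ with vanishing $t^{d-1}$-coefficient), the set $\Gamma_Nc_p=\{\gamma c_p\gamma^{-1}:\gamma\in\Gamma_N\}$ is $Q$-coset fleeing in $\mathfrak{sl}_d(\mathbb{Z})$ and hyperplane-fleeing in $\mathfrak{sl}_d(\mathbb{R})$.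
   Context: $E_{ij}$ is the matrix unit with $1$ in position $(i,j)$. $\mathfrak{sl}_d(\mathbb{Z})$ is the additive group of integer $d\times d$ trace-zero matrices. Companion matrix: for $p(t)=a_0+a_1t+\dots+a_{d-1}t^{d-1}+t^d$, $c_p$ has $1$'s on the subdiagonal, last column $(-a_0,\dots,-a_{d-1})^T$, and zeros elsewhere. For an abelian group $\Lambda$, $S\subset\Lambda$ is $Q$-coset fleeing if for every subgroup $W\le\Lambda$ of index $>Q$, $S$ is not contained in a coset of $W$. A subset of a real vector space is hyperplane-fleeing if it is not contained in any proper affine subspace. *)

(* Defs.v *)
From HB Require Import structures.
From mathcomp Require Import all_boot all_order all_algebra.
From mathcomp Require Import reals.
Set Implicit Arguments. Unset Strict Implicit. Unset Printing Implicit Defensive.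
Import Order.TTheory GRing.Theory Num.Theory.
Local Open Scope ring_scope.

(* Companion matrix of p(t) = a_0 + ... + a_{d-1} t^{d-1} + t^d (p monic of
   degree d): 1's on the subdiagonal, last column (-a_0,...,-a_{d-1})^T. *)
Definition companion (d : nat) (p : {poly int}) : 'M[int]_d :=
  \matrix_(i < d, j < d)
    if (j : nat) == d.-1 then - p`_i else ((i : nat) == j.+1)%:R.

(* The (0-indexed) k-th matrix of the cyclically extended enumeration:
   u_{k+1} = I + E_{ij} with (i,j) = s_{(k mod l)}, l = size s.  Here d = n.+2. *)
Definition elem_u (n : nat) (s : seq ('I_n.+2 * 'I_n.+2)) (k : nat)
  : 'M[int]_n.+2 :=
  let ij := nth (ord0, ord0) s (k %% size s) in 1 + delta_mx ij.1 ij.2.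

(* u_1^{a_1} ... u_N^{a_N}, with integer exponents (ring inverse in SL_d(Z)). *)
Definition gammaN (n : nat) (s : seq ('I_n.+2 * 'I_n.+2)) (N : nat)
  (a : 'I_N -> int) : 'M[int]_n.+2 :=
  \prod_(k < N) (elem_u s k) ^ (a k).

Definition GammaN_orbit (n : nat) (s : seq ('I_n.+2 * 'I_n.+2)) (N : nat)
  (c : 'M[int]_n.+2) : 'M[int]_n.+2 -> Prop :=
  fun M => exists a : 'I_N -> int, M = gammaN s a * c * (gammaN s a)^-1.

Definition in_sl (d : nat) (A : 'M[int]_d) : Prop := \tr A = 0.

Definition is_subgroup_sl (d : nat) (W : 'M[int]_d -> Prop) : Prop :=
  (forall x, W x -> in_sl x) /\ W 0 /\ (forall x y, W x -> W y -> W (x - y)).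

(* The index [sl_d(Z) : W] is > Q (possibly infinite): there are Q+1
   pairwise distinct cosets of W in sl_d(Z). *)
Definition index_gt (d : nat) (W : 'M[int]_d -> Prop) (Q : nat) : Prop :=
  exists f : 'I_Q.+1 -> 'M[int]_d,
    (forall i, in_sl (f i)) /\ (forall i j, i != j -> ~ W (f i - f j)).

Definition in_coset (d : nat) (S W : 'M[int]_d -> Prop) : Prop :=
  exists x, in_sl x /\ forall y, S y -> W (y - x).

Definition coset_fleeing (d : nat) (Q : nat) (S : 'M[int]_d -> Prop) : Prop :=
  forall W, is_subgroup_sl W -> index_gt W Q -> ~ in_coset S W.

(* Hyperplane-fleeing in sl_d(R): the image of S in sl_d(R) is not contained
   in any proper affine subspace x + V (V a proper linear subspace of sl_d(R),
   x in sl_d(R)). *)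
Definition hyperplane_fleeing (R : realType) (d : nat) (S : 'M[int]_d -> Prop)
  : Prop :=
  ~ exists (V : {vspace 'M[R]_d}) (x : 'M[R]_d),
      (forall v, v \in V -> \tr v = 0) /\
      (exists y : 'M[R]_d, \tr y = 0 /\ y \notin V) /\
      \tr x = 0 /\
      (forall A, S A -> map_mx (fun z : int => z%:~R) A - x \in V).

(* Main.v *)
Require Import Defs.
From HB Require Import structures.
From mathcomp Require Import all_boot all_order all_algebra.
From mathcomp Require Import reals.
From mathcomp Require Import ring zify.
Import Order.TTheory GRing.Theory Num.Theory.
Local Open Scope ring_scope.
Set Implicit Arguments. Unset Strict Implicit.

Lemma dmul (n : nat) (a b c d : 'I_n.+2) :
  delta_mx a b * delta_mx c d = delta_mx a d *+ (b == c) :> 'M[int]_n.+2.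
Proof. by rewrite -mulmxE mul_delta_mx_cond. Qed.

Lemma elem_inv (n : nat) (i j : 'I_n.+2) : i != j ->
  (1 + delta_mx i j : 'M[int]_n.+2) \is a GRing.unit /\
  (1 + delta_mx i j : 'M[int]_n.+2)^-1 = 1 - delta_mx i j.
Proof.
move=> ij.
have EE : delta_mx i j * delta_mx i j = 0 :> 'M[int]_n.+2.
  by rewrite dmul eq_sym (negbTE ij) mulr0n.
have h1 : (1 - delta_mx i j) * (1 + delta_mx i j) = 1 :> 'M[int]_n.+2.
  by rewrite mulrBl mul1r mulrDr mulr1 EE addr0 addrK.
have h2 : (1 + delta_mx i j) * (1 - delta_mx i j) = 1 :> 'M[int]_n.+2.
  by rewrite mulrDl mul1r mulrBr mulr1 EE subr0 subrK.
have U : (1 + delta_mx i j : 'M[int]_n.+2) \is a GRing.unit.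
  by apply/unitrP; exists (1 - delta_mx i j).
split=> //.
by rewrite -[LHS]mul1r -{1}h1 -mulrA mulrV // mulr1.
Qed.

Lemma gammaN_split n (s : seq ('I_n.+2 * 'I_n.+2)) N1 N2
  (a1 : 'I_N1 -> int) (a2 : 'I_N2 -> int) : (N1 %% size s = 0)%N ->
  exists a : 'I_(N1 + N2) -> int, gammaN s a = gammaN s a1 * gammaN s a2.
Proof.
move=> H.
exists (fun k => match split k with inl i => a1 i | inr j => a2 j end).
rewrite /gammaN big_split_ord /=. congr (_ * _); apply: eq_bigr => i _.
  by rewrite -[lshift _ _]/(unsplit (inl i)) unsplitK.
rewrite -[rshift _ _]/(unsplit (inr i)) unsplitK.
by rewrite /elem_u /= -modnDml H add0n.
Qed.

Lemma gammaN_cast n (s : seq ('I_n.+2 * 'I_n.+2)) N M (e : N = M)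
  (a : 'I_N -> int) : exists b : 'I_M -> int, gammaN s b = gammaN s a.
Proof. by case: M / e; exists a. Qed.

Definition G n (s : seq ('I_n.+2 * 'I_n.+2)) t (g : 'M[int]_n.+2) :=
  exists a : 'I_(size s * t) -> int, g = gammaN s a.

Lemma G_mul n (s : seq ('I_n.+2 * 'I_n.+2)) t g e :
  G s t g -> G s 1 e -> G s t.+1 (g * e).
Proof.
move=> [a1 ->] [a2 ->].
have [a Ha] := gammaN_split a1 a2 (modnMr _ _).
have E : (size s * t + size s * 1 = size s * t.+1)%N by rewrite -mulnDr addn1.
have [b Hb] := gammaN_cast s E a.
rewrite -Ha -Hb. by exists b.
Qed.

Lemma G_one n (s : seq ('I_n.+2 * 'I_n.+2)) t : G s t 1.
Proof.
exists (fun _ => 0); rewrite /gammaN big1 // => i _; exact: expr0z.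
Qed.

Lemma G_elem n (s : seq ('I_n.+2 * 'I_n.+2)) i j k :
  (i, j) \in s -> G s 1 ((1 + delta_mx i j) ^ k).
Proof.
move=> ijs.
have hq' : (index (i, j) s < size s)%N by rewrite index_mem.
have hq : (index (i, j) s < size s * 1)%N by rewrite muln1.
exists (fun x => if x == Ordinal hq then k else 0).
rewrite /gammaN (eq_bigr (fun x => if x == Ordinal hq then
   (elem_u s (Ordinal hq)) ^ k else 1)); last first.
  by move=> x _; case: eqP => [->|_] //; rewrite expr0z.
rewrite -big_mkcond big_pred1_eq.
by rewrite /elem_u /= modn_small // nth_index.
Qed.

Lemma G_unit n (s : seq ('I_n.+2 * 'I_n.+2)) t g :
  (forall x, x \in s -> x.1 != x.2) -> (0 < size s)%N ->
  G s t g -> g \is a GRing.unit.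
Proof.
move=> sok s0 [a ->]; rewrite /gammaN.
apply: (big_ind (fun x : 'M[int]_n.+2 => x \is a GRing.unit)).
- exact: unitr1.
- by move=> x y ux uy; rewrite unitrMl.
move=> k _; apply: unitrXz; rewrite /elem_u /=.
have := sok _ (mem_nth (ord0, ord0) (ltn_pmod k s0)).
by case/elem_inv.
Qed.


Definition Hyp n (s : seq ('I_n.+2 * 'I_n.+2)) (W : 'M[int]_n.+2 -> Prop) :=
  [/\ (forall x, x \in s -> x.1 != x.2), (forall i j, i != j -> (i,j) \in s),
      W 0 & forall X Y, W X -> W Y -> W (X - Y)].

Definition Good n (s : seq ('I_n.+2 * 'I_n.+2)) (W : 'M[int]_n.+2 -> Prop) t X :=
  forall g, G s t g -> W (g * X * g^-1).

Definition P n (s : seq ('I_n.+2 * 'I_n.+2)) (W : 'M[int]_n.+2 -> Prop) t X :=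
  Good s W t (X *+ 2).

Lemma Hyp_s0 n s W : @Hyp n s W -> (0 < size s)%N.
Proof.
case=> _ sall _ _; have : (ord0, ord_max) \in s by apply: sall; rewrite -val_eqE.
by case: s {sall}.
Qed.

Lemma Good_B n s W t X Y : @Hyp n s W -> Good s W t X -> Good s W t Y -> Good s W t (X - Y).
Proof. by case=> _ _ _ WB HX HY g Hg; rewrite mulrBr mulrBl; apply: WB; [exact: HX|exact: HY]. Qed.

Lemma Good_0 n s W t : @Hyp n s W -> Good s W t 0.
Proof. by case=> _ _ W0 _ g _; rewrite mulr0 mul0r. Qed.

Lemma Good_conj n s W t X e : @Hyp n s W -> Good s W t.+1 X -> G s 1 e ->
  Good s W t (e * X * e^-1).
Proof.
move=> H HX He g Hg; have := HX _ (G_mul Hg He).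
have [sok _ _ _] := H; have s0 := Hyp_s0 H.
rewrite invrM ?(G_unit sok s0 Hg) ?(G_unit sok s0 He) //.
by rewrite !mulrA.
Qed.

Lemma Good_mono n s W t X : Good s W t.+1 X -> @Good n s W t X.
Proof. by move=> HX g Hg; have := HX _ (G_mul Hg (G_one s 1)); rewrite mulr1. Qed.

Lemma Good_W n s W X : @Good n s W 0 X -> W X.
Proof. by move=> HX; have := HX _ (G_one s 0); rewrite mul1r invr1 mulr1. Qed.

Lemma Good_base n s W t c e : @Hyp n s W ->
  (forall g g', G s t.+1 g -> G s t.+1 g' -> W (g * c * g^-1 - g' * c * g'^-1)) ->
  G s 1 e -> Good s W t (e * c * e^-1 - c).
Proof.
move=> H HS He h Hh.
have [sok _ _ _] := H; have s0 := Hyp_s0 H.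
have Hh1 : G s t.+1 h by rewrite -[h]mulr1; apply: G_mul Hh (G_one s 1).
have := HS _ _ (G_mul Hh He) Hh1.
rewrite invrM ?(G_unit sok s0 Hh) ?(G_unit sok s0 He) //.
by rewrite mulrBr mulrBl !mulrA.
Qed.

Lemma P_B n s W t X Y : @Hyp n s W -> P s W t X -> P s W t Y -> P s W t (X - Y).
Proof. by move=> H HX HY; rewrite /P mulrnBl; apply: Good_B. Qed.

Lemma P_0 n s W t : @Hyp n s W -> P s W t 0.
Proof. by move=> H; rewrite /P mul0rn; apply: Good_0. Qed.

Lemma P_N n s W t X : @Hyp n s W -> P s W t X -> P s W t (- X).
Proof. by move=> H HX; rewrite -sub0r; apply: P_B => //; apply: P_0. Qed.

Lemma P_D n s W t X Y : @Hyp n s W -> P s W t X -> P s W t Y -> P s W t (X + Y).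
Proof. by move=> H HX HY; rewrite -[Y]opprK; apply: P_B => //; apply: P_N. Qed.

Lemma P_conj n s W t X e : @Hyp n s W -> P s W t.+1 X -> G s 1 e ->
  P s W t (e * X * e^-1).
Proof. by move=> H HX He; rewrite /P -mulrnAl -mulrnAr; apply: Good_conj. Qed.

Lemma P_mono n s W t X : P s W t.+1 X -> @P n s W t X.
Proof. exact: Good_mono. Qed.

Lemma G_e n s W i j : @Hyp n s W -> i != j -> G s 1 (1 + delta_mx i j).
Proof. by case=> _ sall _ _ ij; rewrite -[X in G _ _ X]expr1z; apply: G_elem; apply: sall. Qed.

Lemma G_e' n s W i j : @Hyp n s W -> i != j -> G s 1 (1 - delta_mx i j).
Proof.
case=> _ sall _ _ ij; have [_ <-] := elem_inv ij.
by rewrite -(expr1z (1 + delta_mx i j)) invr_expz; apply: G_elem; apply: sall.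
Qed.

Lemma conjP n (i j : 'I_n.+2) (X : 'M[int]_n.+2) : i != j ->
  (1 + delta_mx i j) * X * (1 + delta_mx i j)^-1 =
  X + delta_mx i j * X - X * delta_mx i j - delta_mx i j * X * delta_mx i j.
Proof.
move=> ij; have [_ ->] := elem_inv ij.
rewrite mulrDl mul1r mulrBr mulr1 mulrDl opprD addrA.
by rewrite -!mulrA.
Qed.

Lemma conjM n (i j : 'I_n.+2) (X : 'M[int]_n.+2) : i != j ->
  (1 - delta_mx i j) * X * (1 - delta_mx i j)^-1 =
  X - delta_mx i j * X + X * delta_mx i j - delta_mx i j * X * delta_mx i j.
Proof.
move=> ij; have [U E] := elem_inv ij.
have E' : (1 - delta_mx i j : 'M[int]_n.+2)^-1 = 1 + delta_mx i j by rewrite -E invrK.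
by rewrite E' mulrBl mul1r mulrDr mulr1 mulrBl addrA.
Qed.



Lemma P_eq n s W t X Y : @P n s W t X -> X = Y -> P s W t Y.
Proof. by move=> ? <-. Qed.

Ltac ent := apply/matrixP => u v; rewrite !mxE; ring.

Lemma P_row n s W t (a b x : 'I_n.+2) : @Hyp n s W -> a != b -> x != a -> x != b ->
  P s W t.+1 (delta_mx a b) -> P s W t (delta_mx x b).
Proof.
move=> H ab xa xb HX.
have h1 := P_conj H HX (G_e H xa).
have := P_B H h1 (P_mono HX).
have bx : (b == x) = false by rewrite eq_sym (negbTE xb).
move/P_eq; apply; rewrite conjP //.
rewrite !(dmul, eqxx, bx, mulr1n, mulr0n, mul0r, mulr0, subr0).
ent.
Qed.

Lemma P_col n s W t (a b y : 'I_n.+2) : @Hyp n s W -> a != b -> y != a -> y != b ->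
  P s W t.+1 (delta_mx a b) -> P s W t (delta_mx a y).
Proof.
move=> H ab ya yb HX.
have by' : b != y by rewrite eq_sym.
have h1 := P_conj H HX (G_e H by').
have := P_B H (P_mono HX) h1.
move/P_eq; apply; rewrite conjP //.
rewrite !(dmul, eqxx, (negbTE ya), mulr1n, mulr0n, mul0r, mulr0, subr0).
ent.
Qed.

Lemma P_flip n s W t (p q : 'I_n.+2) : @Hyp n s W -> p != q ->
  P s W t.+2 (delta_mx p q) ->
  P s W t (delta_mx q p) /\ P s W t (delta_mx q q - delta_mx p p).
Proof.
move=> H pq HX.
have qp : q != p by rewrite eq_sym.
have HY : P s W t.+1 (delta_mx q q - delta_mx p p - delta_mx q p).
  have h1 := P_conj H HX (G_e H qp).
  have := P_B H h1 (P_mono HX).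
  move/P_eq; apply; rewrite conjP //.
  rewrite !(dmul, eqxx, (negbTE pq), (negbTE qp), mulr1n, mulr0n, mul0r, mulr0, subr0).
  ent.
have X0 : P s W t (delta_mx p q) by do 2 apply: P_mono.
have HZ : P s W t (delta_mx q q - delta_mx p p).
  have h2 := P_conj H HY (G_e H pq).
  have := P_B H (P_B H (P_B H (P_B H h2 (P_mono HY)) X0) X0) X0.
  move/P_eq; apply; rewrite conjP //.
  rewrite !(mulrDr, mulrDl, mulrBr, mulrBl, mulrN, mulNr).
  rewrite !(dmul, eqxx, (negbTE pq), (negbTE qp), mulr1n, mulr0n, mul0r, mulr0, subr0).
  ent.
split=> //.
have := P_B H HZ (P_mono HY).
move/P_eq; apply. ent.
Qed.


Lemma dAd n (i j : 'I_n.+2) (A : 'M[int]_n.+2) :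
  delta_mx i j * A * delta_mx i j = A j i *: delta_mx i j.
Proof.
apply/matrixP => u v; rewrite -!mulmxE !mxE (bigD1 i) //= big1; last first.
  by move=> k /negbTE ki; rewrite !mxE ki mulr0.
rewrite !mxE eqxx /= (bigD1 j) //= big1; last first.
  by move=> k /negbTE kj; rewrite !mxE kj andbF mul0r.
rewrite !mxE eqxx andbT addr0 addr0.
by case: (u == i); case: (v == j); rewrite /= ?mulr1 ?mulr0 ?mul1r ?mul0r.
Qed.

Lemma P_base n s W t (c : 'M[int]_n.+2) (i j : 'I_n.+2) : @Hyp n s W -> i != j ->
  c j i = 1 ->
  (forall g g', G s t.+1 g -> G s t.+1 g' -> W (g * c * g^-1 - g' * c * g'^-1)) ->
  P s W t (delta_mx i j).
Proof.
move=> H ij cji HS.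
have h1 := Good_base H HS (G_e H ij).
have h2 := Good_base H HS (G_e' H ij).
have := Good_B H (Good_0 (t:=t) H) (Good_B H h1 (Good_B H (Good_0 (t:=t) H) h2)).
rewrite /P; move=> HH; apply: (eq_ind _ (fun Z => Good s W t Z) HH).
rewrite conjP // conjM // dAd cji scale1r.
move: (delta_mx i j * c) (c * delta_mx i j) (delta_mx i j) => P1 P2 E.
apply/matrixP => u v; rewrite !mxE /=; ring.
Qed.

Lemma lattice n s W (c : 'M[int]_n.+2) : @Hyp n s W ->
  c ord_max (inord n) = 1 ->
  (forall g g', G s 7 g -> G s 7 g' -> W (g * c * g^-1 - g' * c * g'^-1)) ->
  (forall x y : 'I_n.+2, x != y -> W (delta_mx x y *+ 2)) /\
  (forall x : 'I_n.+2, W ((delta_mx x x - delta_mx ord_max ord_max) *+ 2)).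
Proof.
move=> H cb HS.
set a0 : 'I_n.+2 := inord n; set b0 : 'I_n.+2 := ord_max.
have ab : a0 != b0 by rewrite -val_eqE /= inordK // neq_ltn ltnSn.
have P6 : P s W 6 (delta_mx a0 b0) by apply: P_base H ab cb HS.
have Q1 : forall y, y != a0 -> P s W 5 (delta_mx a0 y).
  move=> y ya; have [->|yb] := eqVneq y b0; first exact: P_mono.
  exact: P_col H ab ya yb P6.
have Q2 : forall x y, x != y -> y != a0 -> P s W 4 (delta_mx x y).
  move=> x y xy ya; have [->|xa] := eqVneq x a0; first exact: P_mono (Q1 _ ya).
  by apply: P_row H _ xa xy (Q1 _ ya); rewrite eq_sym.
have Q3 : forall x y, x != y -> P s W 2 (delta_mx x y).
  move=> x y xy; have [ya|ya] := eqVneq y a0; last by do 2 apply: P_mono; apply: Q2.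
  subst y; have ax : a0 != x by rewrite eq_sym.
  by case: (P_flip H ax (Q2 _ _ ax xy)).
split.
  by move=> x y xy; apply: Good_W; do 2 apply: P_mono; apply: Q3.
move=> x; apply: Good_W.
have [->|xb] := eqVneq x b0; first by rewrite subrr; apply: (P_0 (t:=0) H).
have bx : b0 != x by rewrite eq_sym.
by case: (P_flip H bx (Q3 _ _ bx)).
Qed.


Lemma decomp (R0 : comNzRingType) n (M : 'M[R0]_n.+2) : \tr M = 0 ->
  M = \sum_(x < n.+2) \sum_(y < n.+2)
        (if x == y then M x x *: (delta_mx x x - delta_mx ord_max ord_max)
         else M x y *: delta_mx x y).
Proof.
move=> tr0.
have -> : \sum_(x < n.+2) \sum_(y < n.+2)
        (if x == y then M x x *: (delta_mx x x - delta_mx ord_max ord_max)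
         else M x y *: delta_mx x y) =
   \sum_(x < n.+2) \sum_(y < n.+2) (M x y *: delta_mx x y -
      (if x == y then M x x *: delta_mx ord_max ord_max else 0)).
  apply: eq_bigr => x _; apply: eq_bigr => y _.
  by case: eqP => [<-|_]; rewrite ?scalerBr ?subr0.
under eq_bigr do rewrite sumrB.
rewrite sumrB -(matrix_sum_delta M).
have -> : \sum_(x < n.+2) \sum_(y < n.+2)
   (if x == y then M x x *: delta_mx ord_max ord_max else 0) =
   \sum_(x < n.+2) M x x *: (delta_mx ord_max ord_max : 'M[R0]_n.+2).
  apply: eq_bigr => x _; rewrite -big_mkcond /=.
  by rewrite (big_pred1 x) // => y; rewrite eq_sym.
by rewrite -scaler_suml -/(mxtrace M) tr0 scale0r subr0.
Qed.

Lemma W_sum n (W : 'M[int]_n.+2 -> Prop) I (r : seq I) (F : I -> 'M[int]_n.+2) :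
  W 0 -> (forall X Y, W X -> W Y -> W (X - Y)) -> (forall i, W (F i)) ->
  W (\sum_(i <- r) F i).
Proof.
move=> W0 WB HF; apply: big_ind => //.
move=> x y Wx Wy; have -> : x + y = x - (0 - y) by rewrite sub0r opprK.
by apply: (WB) => //; apply: (WB).
Qed.

Lemma W_mulz n (W : 'M[int]_n.+2 -> Prop) X k :
  W 0 -> (forall X Y, W X -> W Y -> W (X - Y)) -> W X -> W (X *~ k).
Proof.
move=> W0 WB WX.
have Hn : forall m, W (X *+ m).
  elim=> [|m IH]; first by rewrite mulr0n.
  have -> : X *+ m.+1 = X - (0 - X *+ m) by rewrite sub0r opprK mulrS.
  by apply: (WB) => //; apply: (WB).
case: k => m; first exact: Hn.
by rewrite NegzE mulrNz -sub0r; apply: (WB) => //; apply: Hn.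
Qed.

Lemma par2 (a b : int) : ((a %% 2)%Z == 0) = ((b %% 2)%Z == 0) -> (2 %| a - b)%Z.
Proof. move=> h. rewrite -eqz_mod_dvd. apply/eqP. have := h. case: eqP; case: eqP; lia. Qed.


Lemma W_even n (W : 'M[int]_n.+2 -> Prop) (M : 'M[int]_n.+2) (a : int) :
  W 0 -> (forall X Y, W X -> W Y -> W (X - Y)) -> W (M *+ 2) -> (2 %| a)%Z ->
  W (a *: M).
Proof.
move=> W0 WB WM ev.
rewrite -(divzK ev) -[_ * 2]intz scaler_int mulrzA mulrzAC.
by apply: W_mulz.
Qed.

Unset Implicit Arguments. Set Strict Implicit.

Theorem proposition6p1 (R : realType) (n : nat)
  (s : seq ('I_n.+2 * 'I_n.+2)) :
  uniq s ->
  (forall i j : 'I_n.+2, ((i, j) \in s) = (i != j)) ->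
  exists Q N : nat, (0 < N)%N /\
    forall p : {poly int}, p \is monic -> size p = n.+3 ->
      \tr (companion n.+2 p) = 0 ->
      coset_fleeing Q (GammaN_orbit s N (companion n.+2 p)) /\
      hyperplane_fleeing R (GammaN_orbit s N (companion n.+2 p)).
Proof.
move=> us hs.
have H0 : forall W, W 0 -> (forall X Y, W X -> W Y -> W (X - Y)) -> Hyp s W.
  move=> W W0 WB; split=> //.
    by move=> [i j] /=; rewrite hs.
  by move=> i j ij; rewrite hs.
have s0 : (0 < size s)%N := Hyp_s0 (H0 (fun _ => True) I (fun _ _ _ _ => I)).
exists (2 ^ (n.+2 * n.+2))%N, (size s * 7)%N; split; first by rewrite muln_gt0 s0.
move=> p _ _ _; set c := companion n.+2 p.
have cb : c ord_max (inord n) = 1.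
  rewrite /c /companion mxE /= inordK // eqn_leq ltnn /= eqxx.
  by rewrite andbF.
split.
  move=> W [Wsl [W0 WB]] [f [fsl fW]] [x [xsl Hx]].
  have HS : forall g g', G s 7 g -> G s 7 g' -> W (g * c * g^-1 - g' * c * g'^-1).
    move=> g g' [a ->] [b ->].
    have := WB _ _ (Hx _ (ex_intro _ a erefl)) (Hx _ (ex_intro _ b erefl)).
    by rewrite opprB addrA subrK.
  have [Hoff Hdiag] := lattice (H0 W W0 WB) cb HS.
  pose phi := fun i => ([ffun xy : 'I_n.+2 * 'I_n.+2 => ((f i xy.1 xy.2 %% 2)%Z == 0)] : {ffun 'I_n.+2 * 'I_n.+2 -> bool}).
  case: (boolP [exists i, exists j, (i != j) && (phi i == phi j)]).
    move/existsP => [i /existsP [j /andP [ij /eqP pij]]].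
    apply: (fW i j ij).
    have trD : \tr (f i - f j) = 0.
      by rewrite raddfB /=; move: (fsl i) (fsl j); rewrite /in_sl => -> ->; rewrite subrr.
    rewrite (decomp trD); apply: W_sum => // u; apply: W_sum => // v.
    have ev : forall u v, (2 %| (f i - f j) u v)%Z.
      move=> u' v'; rewrite !mxE; apply: (@par2 (f i u' v') (f j u' v')).
      by have := congr1 (fun g : {ffun 'I_n.+2 * 'I_n.+2 -> bool} => g (u', v')) pij; rewrite !ffunE.
    have [e|uv] := eqVneq u v; apply: W_even => //; solve [exact: Hdiag | exact: Hoff | exact: ev].

  move/existsPn => Hn.
  have inj : injective phi.
    move=> i j e; apply/eqP; apply: contraT => ij.
    by have := Hn i; move/existsPn/(_ j); rewrite ij e eqxx.
  have := leq_card phi inj; rewrite card_ord card_ffun card_bool card_prod card_ord.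
  by rewrite ltnn.
move=> [V [x0 [HV [[y [try yV]] [trx HA]]]]].
pose f := fun z : int => (z%:~R : R).
pose W' := fun X : 'M[int]_n.+2 => map_mx f X \in V.
have mapB : forall X Y : 'M[int]_n.+2, map_mx f (X - Y) = map_mx f X - map_mx f Y.
  by move=> X Y; apply/matrixP => u v; rewrite !mxE /f rmorphB.
have W0 : W' 0.
  rewrite /W' (_ : map_mx f 0 = 0) ?mem0v //.
  by apply/matrixP => u v; rewrite !mxE.
have WB : forall X Y, W' X -> W' Y -> W' (X - Y).
  by move=> X Y WX WY; rewrite /W' mapB memvB.
have HS : forall g g', G s 7 g -> G s 7 g' -> W' (g * c * g^-1 - g' * c * g'^-1).
  move=> g g' [a ->] [b ->].
  have := memvB (HA _ (ex_intro _ a erefl)) (HA _ (ex_intro _ b erefl)).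
  by rewrite /W' mapB opprB addrA subrK.
have [Hoff Hdiag] := lattice (H0 W' W0 WB) cb HS.
have map2 : forall M : 'M[int]_n.+2, map_mx f (M *+ 2) = map_mx f M *+ 2.
  by move=> M; apply/matrixP => u v; rewrite !mxE /f rmorphD.
have mapd : forall a b : 'I_n.+2, map_mx f (delta_mx a b) = delta_mx a b.
  by move=> a b; apply/matrixP => u v; rewrite !mxE /f rmorph_nat.
have e2 : forall (a : R) (M : 'M[R]_n.+2), a *: M = (a / 2) *: (M *+ 2).
  by move=> a M; rewrite -scaler_nat scalerA mulfVK // pnatr_eq0.
apply: (negP yV); rewrite (decomp try); apply: memv_suml => u _; apply: memv_suml => v _.
have [e|uv] := eqVneq u v; rewrite e2; apply: memvZ.
  by have := Hdiag u; rewrite /W' map2 mapB !mapd.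
by have := Hoff u v uv; rewrite /W' map2 mapd.
Qed.
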